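(* Let $A,B$ be unital Banach algebras, where $A$ is a zero product determined Banach algebra and $B$ is Dedekind-finite. Let $\varphi,\psi:A\to B$ be bounded linear maps such that $\varphi(a)\psi(b)=0$ whenever $a,b\in A$ satisfy $ab=0$, and suppose that both $\varphi(A)$ and $\psi(A)$ contain invertible elements of $B$. Then: (1) $\varphi$ and $\psi$ map invertible elements to invertible elements; (2) $\ker\varphi=\ker\psi$, and this set is a two-sided ideal of $A$; (3) $\varphi$ is surjective if and only if $\psi$ is surjective.
   Context: A Banach algebra $A$ is zero product determined (as a Banach algebra) if for every Banach space $X$ and every bounded bilinear $V:A\times A\to X$ with $V(a,b)=0$ whenever $ab=0$, there is a bounded linear $T:A\to X$ with $V(a,b)=T(ab)$ for all $a,b\in A$. A unital algebra is Dedekind-finite if every one-sided invertible element is invertible. *)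

(* Defs.v *)
From HB Require Import structures.
From mathcomp Require Import all_boot all_order all_algebra.
From mathcomp Require Import all_classical all_reals all_analysis.
From mathcomp Require Import complex.
Set Implicit Arguments. Unset Strict Implicit. Unset Printing Implicit Defensive.
Import Order.TTheory GRing.Theory Num.Theory.
Import numFieldNormedType.Exports.
Local Open Scope ring_scope.

(* A unital Banach algebra structure on a Banach space A over K:
   an associative, bilinear, unital multiplication with submultiplicative norm
   and ||1|| = 1 (so in particular 1 <> 0).  (The HB joins of mathcomp's ring
   hierarchy with the normed-module hierarchy cannot be declared, so the
   multiplication is carried as an explicit record.) *)
Record banach_alg (K : numFieldType) (A : completeNormedModType K) := BanachAlg {
  bmul : A -> A -> A ;
  bone : A ;
  bmulA : forall a b c, bmul a (bmul b c) = bmul (bmul a b) c ;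
  bmul1l : forall a, bmul bone a = a ;
  bmul1r : forall a, bmul a bone = a ;
  bmulDl : forall a b c, bmul (a + b) c = bmul a c + bmul b c ;
  bmulDr : forall a b c, bmul a (b + c) = bmul a b + bmul a c ;
  bmulZl : forall (k : K) a b, bmul (k *: a) b = k *: bmul a b ;
  bmulZr : forall (k : K) a b, bmul a (k *: b) = k *: bmul a b ;
  bnormM : forall a b, `|bmul a b| <= `|a| * `|b| ;
  bnorm1 : `|bone| = 1
}.

Section Defs.
Variable K : numFieldType.

Definition bounded_linear (U V : normedModType K) (f : U -> V) : Prop :=
  (forall (k : K) (u v : U), f (k *: u + v) = k *: f u + f v) /\
  exists C : K, forall u : U, `|f u| <= C * `|u|.

Definition bounded_bilinear (U V W : normedModType K) (f : U -> V -> W) : Prop :=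
  (forall (k : K) (u u' : U) (v : V), f (k *: u + u') v = k *: f u v + f u' v) /\
  (forall (k : K) (u : U) (v v' : V), f u (k *: v + v') = k *: f u v + f u v') /\
  exists C : K, forall (u : U) (v : V), `|f u v| <= C * `|u| * `|v|.

Definition zero_product_determined (A : completeNormedModType K)
    (mA : banach_alg A) : Prop :=
  forall (X : completeNormedModType K) (V : A -> A -> X),
    bounded_bilinear V ->
    (forall a b : A, bmul mA a b = 0 -> V a b = 0) ->
    exists T : A -> X, bounded_linear T /\
      forall a b : A, V a b = T (bmul mA a b).

Definition invertible (B : completeNormedModType K) (mB : banach_alg B)
    (b : B) : Prop :=
  exists c : B, bmul mB b c = bone mB /\ bmul mB c b = bone mB.

Definition dedekind_finite (B : completeNormedModType K) (mB : banach_alg B) : Prop :=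
  forall a b : B, bmul mB a b = bone mB -> bmul mB b a = bone mB.

Definition two_sided_ideal (A : completeNormedModType K) (mA : banach_alg A)
    (I : set A) : Prop :=
  I 0 /\ (forall a b, I a -> I b -> I (a - b)) /\
  (forall x a, I a -> I (bmul mA x a) /\ I (bmul mA a x)).

End Defs.

(* Main.v *)
Require Import Defs.
From HB Require Import structures.
From mathcomp Require Import all_boot all_order all_algebra.
From mathcomp Require Import all_classical all_reals all_analysis.
From mathcomp Require Import complex.

Import Order.TTheory GRing.Theory Num.Theory.
Import numFieldNormedType.Exports.
Local Open Scope ring_scope.
Local Open Scope classical_set_scope.

Set Implicit Arguments. Unset Strict Implicit.
Section Helpers.
Variable K : numFieldType.
Variable B : completeNormedModType K.
Variable mB : banach_alg B.

Lemma bmul0l (b : B) : bmul mB 0 b = 0.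
Proof. move: (bmulDl mB 0 0 b); rewrite addr0 => /(congr1 (fun z => z - bmul mB 0 b)). by rewrite addrK subrr. Qed.

Lemma bmul0r (b : B) : bmul mB b 0 = 0.
Proof. move: (bmulDr mB b 0 0); rewrite addr0 => /(congr1 (fun z => z - bmul mB b 0)). by rewrite addrK subrr. Qed.

Lemma inv_mul_l (df : dedekind_finite mB) x y :
  invertible mB (bmul mB x y) -> invertible mB x.
Proof.
move=> [z [h1 h2]]; exists (bmul mB y z).
have e : bmul mB x (bmul mB y z) = bone mB by rewrite bmulA.
by split=> //; apply: df.
Qed.

Lemma inv_mul_r (df : dedekind_finite mB) x y :
  invertible mB (bmul mB x y) -> invertible mB y.
Proof.
move=> [z [h1 h2]]; exists (bmul mB z x).
have e : bmul mB (bmul mB z x) y = bone mB by rewrite -bmulA.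
by split=> //; apply: df.
Qed.

Lemma inv_mul x y : invertible mB x -> invertible mB y ->
  invertible mB (bmul mB x y).
Proof.
move=> [x' [hx1 hx2]] [y' [hy1 hy2]]; exists (bmul mB y' x'); split.
  by rewrite bmulA -(bmulA _ x) hy1 bmul1r.
by rewrite bmulA -(bmulA _ y') hx2 bmul1r.
Qed.

End Helpers.

Theorem mainTheorem14 (R : realType)
  (A B : completeNormedModType (complex R : numFieldType))
  (mA : banach_alg A) (mB : banach_alg B)
  (phi psi : A -> B) :
  zero_product_determined mA ->
  dedekind_finite mB ->
  bounded_linear phi -> bounded_linear psi ->
  (forall a b : A, bmul mA a b = 0 -> bmul mB (phi a) (psi b) = 0) ->
  (exists a : A, invertible mB (phi a)) ->
  (exists a : A, invertible mB (psi a)) ->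
  [/\ (forall a : A, invertible mA a ->
          invertible mB (phi a) /\ invertible mB (psi a)),
      (forall a : A, phi a = 0 <-> psi a = 0)
        /\ two_sided_ideal mA [set a : A | phi a = 0]
    & ((forall y : B, exists x : A, phi x = y) <->
       (forall y : B, exists x : A, psi x = y))].
Proof.
move=> zpd df [phiL [C1 hC1]] [psiL [C2 hC2]] hzp [a0 ip0] [b0 iq0].
have phiD x y : phi (x + y) = phi x + phi y.
  by move: (phiL 1 x y); rewrite !scale1r.
have phiB x y : phi (x - y) = phi x - phi y.
  by have := phiL (-1) y x; rewrite !scaleN1r addrC => ->; rewrite addrC.
have phi0 : phi 0 = 0.
  by move: (phiB 0 0); rewrite !subrr.
have [T [_ hT]] : exists T : A -> B, bounded_linear T /\
    forall a b : A, bmul mB (phi a) (psi b) = T (bmul mA a b).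
  apply: (zpd B (fun a b => bmul mB (phi a) (psi b))) => //.
  split; [|split].
  - by move=> k u u' v; rewrite phiL bmulDl bmulZl.
  - by move=> k u v v'; rewrite psiL bmulDr bmulZr.
  exists (C1 * C2) => u v.
  apply: le_trans (bnormM _ _ _) _.
  have -> : C1 * C2 * `|u| * `|v| = (C1 * `|u|) * (C2 * `|v|) by rewrite mulrACA mulrA.
  by apply: ler_pM; rewrite ?normr_ge0 ?hC1 ?hC2.
set u := phi (bone mA). set v := psi (bone mA).
have hT1 a : bmul mB (phi a) v = T a by rewrite hT bmul1r.
have hT2 a : bmul mB u (psi a) = T a by rewrite hT bmul1l.
have iuv : invertible mB (bmul mB (phi a0) (psi b0)) by apply: inv_mul.
have iu : invertible mB u.
  by apply: (inv_mul_l (y:=(psi (bmul mA a0 b0))) df); rewrite hT2 -hT.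
have iv : invertible mB v.
  by apply: (inv_mul_r (x:=(phi (bmul mA a0 b0))) df); rewrite hT1 -hT.
have iT1 : invertible mB (T (bone mA)) by rewrite -hT1; apply: inv_mul.
case: iu => u' [hu1 hu2]; case: iv => v' [hv1 hv2].
have phiT c : phi c = bmul mB (T c) v' by rewrite -hT1 -bmulA hv1 bmul1r.
have psiT c : psi c = bmul mB u' (T c) by rewrite -hT2 bmulA hu2 bmul1l.
have kerE a : phi a = 0 <-> psi a = 0.
  split=> h.
    by rewrite psiT -hT1 h bmul0l bmul0r.
  by rewrite phiT -hT2 h bmul0r bmul0l.
split.
- move=> a [a' [h1 h2]]; split.
    by apply: (inv_mul_l (y:=(psi a')) df); rewrite hT h1.
  by apply: (inv_mul_r (x:=(phi a')) df); rewrite hT h2.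
- split=> //; split; first exact: phi0.
  split; first by move=> a b /= ha hb; rewrite phiB ha hb subrr.
  move=> x a /= ha; split.
    by rewrite phiT -hT (proj1 (kerE a) ha) bmul0r bmul0l.
  by rewrite phiT -hT ha bmul0l bmul0l.
- split=> hs y.
    have [x hx] := hs (bmul mB u (bmul mB y v')).
    exists x; rewrite psiT -hT1 hx -!bmulA hv2 bmul1r bmulA hu2 bmul1l //.
  have [x hx] := hs (bmul mB u' (bmul mB y v)).
  exists x; rewrite phiT -hT2 hx !bmulA hu1 bmul1l -bmulA hv1 bmul1r //.
Qed.
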